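(* Consider a finite Markov decision process with state set $\mathcal S$, action set $\mathcal A$, transition function $P$, reward function $R$, initial state distribution $d_0$ and discount factor $\gamma\in[0,1)$, together with a finite set of options $\mathcal O$ in which every option $o$ has an intra-option policy $\pi_o(s,a)$, a termination function $\beta_o(s,\vartheta)\in[0,1]$ differentiable in a parameter vector $\vartheta$, and a policy over options $\pi_{\mathcal O}(s,o)$. Let $X'=(O_0,S_1,O_1,S_2,O_2,S_3,\dots)$ be the random state-option transition path (state-option pairs shifted by one time step) generated by the option dynamics described in the context, and for $\mathcal T\in\mathbb N$ let $G^{\mathcal T}_\vartheta$ be the $\mathcal T$-step finite horizon Fisher information matrix with respect to $\vartheta$ of the distribution of this path truncated at time step $\mathcal T$, written in the form $$\big(G^{\mathcal T}_\vartheta\big)_{i,j}=-\mathbb E\Big[\frac{\partial^2\ln\Pr(X'_{0:\mathcal T};\vartheta)}{\partial\vartheta_i\partial\vartheta_j}\Big].$$ Let $\mu_{\mathcal O}(s',o)$ be the stationary distribution of state-option pairs $(s',o)$ (state $s'$ entered while option $o$ is active). Then $$\Big(\lim_{\mathcal T\to\infty}\frac1{\mathcal T}G^{\mathcal T}_\vartheta\Big)_{i,j}=-\sum_{s',o}\mu_{\mathcal O}(s',o)\,\frac{\partial\ln\beta_o(s',\vartheta)}{\partial\vartheta_i}\,\frac{\partial\ln\big(1-\beta_o(s',\vartheta)+\beta_o(s',\vartheta)\pi_{\mathcal O}(s',o)\big)}{\partial\vartheta_j}.$$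
   Context: Option dynamics (option-critic framework, all options available in every state): at time $t$ the agent is in state $S_t$ with active option $O_t$; it draws $A_t\sim\pi_{O_t}(S_t,\cdot)$, receives reward $R_t$ with $\mathbb E[R_t\mid S_t=s,A_t=a]=R(s,a)$, and moves to $S_{t+1}\sim P(S_t,A_t,\cdot)$. The next option is drawn with probability $\Pr(O_{t+1}=o'\mid O_t=o,S_{t+1}=s')=(1-\beta_o(s',\vartheta))\mathbf 1_{o'=o}+\beta_o(s',\vartheta)\pi_{\mathcal O}(s',o')$. The discounted problem is treated as an undiscounted one that terminates with probability $1-\gamma$ at each step. The process is assumed ergodic and irreducible so that the stationary distribution $\mu_{\mathcal O}$ is well defined, and all logarithms appearing are assumed finite (in particular $0<\beta_o(s',\vartheta)$ and $\beta_o(s',\vartheta)(1-\pi_{\mathcal O}(s',o))\neq 0$ where needed). *)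

(* Defs.v *)
From HB Require Import structures.
From mathcomp Require Import all_boot all_order all_algebra.
From mathcomp Require Import all_classical all_reals all_analysis.
Set Implicit Arguments. Unset Strict Implicit. Unset Printing Implicit Defensive.
Import Order.TTheory GRing.Theory Num.Theory.
Import numFieldNormedType.Exports.
Local Open Scope ring_scope.

Section OptionDynamics.
Variables (R : realType) (S A O : finType) (n : nat).

Definition evec (i : 'I_n) : 'rV[R]_n := delta_mx 0 i.

Definition is_distr (T : finType) (p : T -> R) :=
  (forall x, 0 <= p x) /\ \sum_(x : T) p x = 1.

(* state transition while option o' is active in state s':
   Pr(S_{t+1} = s'' | S_t = s', O_t = o') = sum_a pi_{o'}(s',a) P(s',a,s'') *)
Definition state_step (pi : O -> S -> A -> R) (P : S -> A -> S -> R)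
  (s' : S) (o' : O) (s'' : S) : R :=
  \sum_(a : A) pi o' s' a * P s' a s''.

(* option transition:
   Pr(O_{t+1}=o' | O_t=o, S_{t+1}=s') = (1-beta_o(s'))1_{o'=o} + beta_o(s') piO(s',o') *)
Definition option_step (beta : O -> S -> 'rV[R]_n -> R) (piO : S -> O -> R)
  (th : 'rV[R]_n) (o : O) (s' : S) (o' : O) : R :=
  (1 - beta o s' th) * (o' == o)%:R + beta o s' th * piO s' o'.

(* Transition kernel of the shifted state-option chain X'_t = (O_t, S_{t+1}) *)
Definition pair_kernel pi P beta piO (th : 'rV[R]_n) (x y : O * S) : R :=
  option_step beta piO th x.1 x.2 y.1 * state_step pi P x.2 y.1 y.2.

(* Law of X'_0 = (O_0, S_1): S_0 ~ d0, O_0 ~ piO(S_0, .), then one step. *)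
Definition pair_init pi P (piO : S -> O -> R) (d0 : S -> R) (x : O * S) : R :=
  \sum_(s0 : S) d0 s0 * piO s0 x.1 * state_step pi P s0 x.1 x.2.

Fixpoint path_tail_prob pi P beta piO th (prev : O * S) (l : seq (O * S)) : R :=
  match l with
  | [::] => 1
  | y :: l' => pair_kernel pi P beta piO th prev y * path_tail_prob pi P beta piO th y l'
  end.

(* Probability of the truncated path X'_{0:T} = (X'_0, ..., X'_{T-1}) *)
Definition path_prob pi P beta piO d0 (th : 'rV[R]_n) (l : seq (O * S)) : R :=
  match l with
  | [::] => 1
  | y :: l' => pair_init pi P piO d0 y * path_tail_prob pi P beta piO th y l'
  end.

Definition fisherT pi P beta piO d0 (T : nat) (th : 'rV[R]_n) (i j : 'I_n) : R :=
  - \sum_(x : T.-tuple (O * S))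
      path_prob pi P beta piO d0 th x *
      'D_(evec i) ('D_(evec j) (fun th' => ln (path_prob pi P beta piO d0 th' x))) th.

Fixpoint kpow (T : finType) (K : T -> T -> R) (m : nat) (x y : T) : R :=
  match m with
  | 0 => (x == y)%:R
  | m'.+1 => \sum_(z : T) kpow K m' x z * K z y
  end.

Definition irreducible_chain (T : finType) (K : T -> T -> R) :=
  forall x y : T, exists m, 0 < kpow K m x y.

(* ergodic (finite chain): irreducible and aperiodic, i.e. some power of the
   kernel has all entries positive (primitive kernel) *)
Definition ergodic_chain (T : finType) (K : T -> T -> R) :=
  exists m, forall x y : T, 0 < kpow K m x y.

Definition stationary (T : finType) (K : T -> T -> R) (mu : T -> R) :=
  is_distr mu /\ forall y : T, \sum_(x : T) mu x * K x y = mu y.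

End OptionDynamics.

(* Main.v *)
Require Import Defs.
From HB Require Import structures.
From mathcomp Require Import all_boot all_order all_algebra.
From mathcomp Require Import all_classical all_reals all_analysis.
From mathcomp Require Import lra ring.
Import Order.TTheory GRing.Theory Num.Theory.
Import numFieldNormedType.Exports.
Local Open Scope classical_set_scope.
Local Open Scope ring_scope.
Section Calc.
Variable R : realType.
Variable V : normedModType R.
Implicit Types (f g : V -> R) (x v u : V).

Lemma Dln f x v : differentiable f x -> 0 < f x ->
  derivable (fun t => ln (f t)) x v /\
  'D_v (fun t => ln (f t)) x = 'D_v f x / f x.
Proof.
move=> df fx0.
have hd : is_derive (f x) 1 (@ln R) (f x)^-1 := is_derive1_ln fx0.
have dl1 : derivable (@ln R) (f x) 1 by case: hd.
have dln : differentiable (@ln R) (f x) by apply/derivable1_diffP.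
have dc : differentiable (@ln R \o f) x := differentiable_comp df dln.
split; first exact: (diff_derivable dc).
change ('D_v (@ln R \o f) x = 'D_v f x / f x).
rewrite (deriveE _ dc) diff_comp // (deriveE _ df) /= (deriv1E dl1) /=.
by case: hd => _ hv; rewrite derive1E hv.
Qed.


Lemma near_pos f x : differentiable f x -> 0 < f x -> \forall t \near x, 0 < f t.
Proof.
move=> /differentiable_continuous hc fx0.
exact: (@cvgr_gt _ _ _ _ f (f x) hc 0 fx0).
Qed.

Lemma DDln f x u v : (forall t, differentiable f t) -> 0 < f x ->
  derivable ('D_v f) x u ->
  derivable ('D_v (fun t => ln (f t))) x u /\
  'D_u ('D_v (fun t => ln (f t))) x =
    'D_u ('D_v f) x / f x - 'D_v f x * 'D_u f x / (f x) ^+ 2.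
Proof.
move=> df fx0 dDf.
set G := ('D_v f) * (fun t => (f t)^-1).
have hn : \forall t \near x, G t = 'D_v (fun t => ln (f t)) t.
  near=> t.
  have ft0 : 0 < f t by near: t; exact: near_pos.
  by rewrite /G /= (@Dln f t v (df t) ft0).2.
have fxn0 : f x != 0 by rewrite gt_eqF.
have hfd : derivable f x u by apply: diff_derivable.
have dinv : derivable (fun t => (f t)^-1) x u := derivableV fxn0 hfd.
have dG : derivable G x u := derivableM dDf dinv.
split; first exact: (near_eq_derivable hn dG).
have hn' : \forall t \near x, 'D_v (fun t => ln (f t)) t = G t.
  by near=> t; rewrite (near hn t).
rewrite (near_eq_derive _ hn') /G (deriveM dDf dinv) (deriveV fxn0 hfd).
have sc (a b : R) : a *: b = a * b by [].
rewrite !sc; field.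
Unshelve. all: by end_near.
Qed.


Lemma derive_seqsum (I : Type) (r : seq I) (G : I -> V -> R) x v :
  List.Forall (fun k => derivable (G k) x v) r ->
  derivable (fun t => \sum_(k <- r) G k t) x v /\
  'D_v (fun t => \sum_(k <- r) G k t) x = \sum_(k <- r) 'D_v (G k) x.
Proof.
elim: r => [|k r IH] hF.
  have -> : (fun t => \sum_(k <- [::]) G k t) = cst 0.
    by apply: funext => t; rewrite big_nil.
  by rewrite big_nil derive_cst; split => //; apply: derivable_cst.
inversion hF as [|k' r' hk hr]; subst.
have [d1 e1] := IH hr.
have -> : (fun t => \sum_(j <- k :: r) G j t) = G k + (fun t => \sum_(j <- r) G j t).
  by apply: funext => t; rewrite big_cons.
split; first exact: derivableD hk d1.
by rewrite big_cons (deriveD hk d1) e1.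
Qed.

Lemma ln_prod (I : Type) (r : seq I) (F : I -> R) c :
  0 < c -> List.Forall (fun k => 0 < F k) r ->
  ln (c * \prod_(k <- r) F k) = ln c + \sum_(k <- r) ln (F k).
Proof.
elim: r c => [|k r IH] c c0 hF; first by rewrite !big_nil mulr1 addr0.
inversion hF as [|k' r' hk hr]; subst.
by rewrite big_cons mulrA IH ?mulr_gt0 // big_cons lnM ?posrE // addrA.
Qed.

Lemma near_Forall (I : Type) (r : seq I) (F : I -> V -> R) x :
  (forall k t, differentiable (F k) t) ->
  List.Forall (fun k => 0 < F k x) r ->
  \forall t \near x, List.Forall (fun k => 0 < F k t) r.
Proof.
move=> dF; elim: r => [|k r IH] hF.
  by near=> t; constructor.
inversion hF as [|k' r' hk hr]; subst.
have h1 := @near_pos (F k) x (dF k x) hk.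
have h2 := IH hr.
near=> t; constructor; [near: t; exact: h1 | near: t; exact: h2].
Unshelve. all: by end_near.
Qed.

Lemma DDln_prod (I : Type) (r : seq I) (F : I -> V -> R) c x u v :
  0 < c -> (forall k t, differentiable (F k) t) ->
  (forall k, derivable ('D_v (F k)) x u) ->
  List.Forall (fun k => 0 < F k x) r ->
  'D_u ('D_v (fun t => ln (c * \prod_(k <- r) F k t))) x =
  \sum_(k <- r) 'D_u ('D_v (fun t => ln (F k t))) x.
Proof.
move=> c0 dF dDF hF.
have hn := near_join (@near_Forall I r F x dF hF).
have key : \forall t \near x, 'D_v (fun t => ln (c * \prod_(k <- r) F k t)) t =
    \sum_(k <- r) 'D_v (fun t => ln (F k t)) t.
  near=> t.
  have ht : \forall t' \near t, List.Forall (fun k => 0 < F k t') r.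
    by near: t; exact: hn.
  have hpos : List.Forall (fun k => 0 < F k t) r by apply: (nbhs_singleton ht).
  have e1 : \forall t' \near t, ln (c * \prod_(k <- r) F k t') =
      (cst (ln c) + (fun t' => \sum_(k <- r) ln (F k t'))) t'.
    by near=> t'; rewrite /= ln_prod //; near: t'; exact: ht.
  rewrite (near_eq_derive _ e1).
  have hder : List.Forall (fun k => derivable (fun t => ln (F k t)) t v) r.
    apply: List.Forall_impl hpos => k hk.
    exact: (@Dln (F k) t v (dF k t) hk).1.
  have [d1 e2] := @derive_seqsum I r _ t v hder.
  by rewrite (deriveD (derivable_cst _ _ _) d1) derive_cst add0r e2.
rewrite (near_eq_derive _ key).
have hder : List.Forall (fun k => derivable ('D_v (fun t => ln (F k t))) x u) r.
  apply: List.Forall_impl hF => k hk.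
  exact: (@DDln (F k) x u v (dF k) hk (dDF k)).1.
by have [_ ->] := @derive_seqsum I r _ x u hder.
Unshelve. all: by end_near.
Qed.

End Calc.
Lemma sum_tupleS {R : realType} {X : finType} {k : nat} (F : seq X -> R) :
  \sum_(t : k.+1.-tuple X) F t = \sum_(x : X) \sum_(t : k.-tuple X) F (x :: t).
Proof.
rewrite pair_big /=.
rewrite (reindex (fun p : X * k.-tuple X => [tuple of p.1 :: p.2])) /=.
  by apply: eq_bigr.
exists (fun t : k.+1.-tuple X => (thead t, [tuple of behead t])).
  by move=> [x t] _ /=; rewrite theadE; congr pair; apply: val_inj.
by move=> t _; rewrite /= [in RHS](tuple_eta t).
Qed.

Lemma sum_tuple0 {R : realType} {X : finType} (F : seq X -> R) :
  \sum_(t : 0.-tuple X) F t = F [::].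
Proof.
rewrite (big_pred1 [tuple]) // => t /=.
by symmetry; apply/eqP; exact: tuple0.
Qed.
Section Markov.
Variable R : realType.
Variable T : finType.
Variable K : T -> T -> R.
Hypothesis K0 : forall x y, 0 <= K x y.
Hypothesis K1 : forall x, \sum_y K x y = 1.

Lemma argmax_ex {U : finType} (f : U -> R) (x0 : U) : exists z, forall y, f y <= f z.
Proof.
case: (@arg_maxP _ _ U x0 xpredT f isT) => z _ H; exists z => y; exact: H.
Qed.

Lemma argmin_ex {U : finType} (f : U -> R) (x0 : U) : exists z, forall y, f z <= f y.
Proof.
case: (@arg_minP _ _ U x0 xpredT f isT) => z _ H; exists z => y; exact: H.
Qed.

Lemma kpowD a b x y : kpow K (a + b) x y = \sum_z kpow K a x z * kpow K b z y.
Proof.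
elim: b y => [|b IH] y.
  rewrite addn0 /= (bigD1 y) //= eqxx mulr1 big1 ?addr0 // => z /negbTE ->.
  by rewrite mulr0.
rewrite addnS /=.
under eq_bigr do rewrite IH mulr_suml.
rewrite exchange_big /=; apply: eq_bigr => z _.
by rewrite mulr_sumr; apply: eq_bigr => w _; rewrite mulrA.
Qed.

Lemma kpow1 x y : kpow K 1 x y = K x y.
Proof.
rewrite /= (bigD1 x) //= eqxx mul1r big1 ?addr0 // => z.
by rewrite eq_sym => /negbTE ->; rewrite mul0r.
Qed.

Lemma kpow_ge0 m x y : 0 <= kpow K m x y.
Proof.
elim: m y => [|m IH] y /=; first by rewrite ler0n.
by apply: sumr_ge0 => z _; apply: mulr_ge0.
Qed.

Lemma kpow_sum1 m x : \sum_y kpow K m x y = 1.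
Proof.
elim: m => [|m IH].
  rewrite (bigD1 x) //= eqxx big1 ?addr0 // => z.
  by rewrite eq_sym => /negbTE ->.
rewrite /= exchange_big /= -[RHS]IH; apply: eq_bigr => z _.
by rewrite -mulr_sumr K1 mulr1.
Qed.

Lemma kpow_le1 m x y : kpow K m x y <= 1.
Proof.
rewrite -(kpow_sum1 m x) (bigD1 y) //= lerDl.
by apply: sumr_ge0 => z _; apply: kpow_ge0.
Qed.

Lemma convex_bounds (p v : T -> R) lo hi :
  (forall z, 0 <= p z) -> \sum_z p z = 1 -> (forall z, lo <= v z <= hi) ->
  lo <= \sum_z p z * v z <= hi.
Proof.
move=> p0 p1 hv; apply/andP; split.
  rewrite -[lo]mul1r -p1 mulr_suml; apply: ler_sum => z _.
  by apply: ler_wpM2l => //; case/andP: (hv z).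
rewrite -[hi]mul1r -p1 mulr_suml; apply: ler_sum => z _.
by apply: ler_wpM2l => //; case/andP: (hv z).
Qed.

Variable mu : T -> R.
Hypothesis hmu : stationary K mu.

Lemma stat_pow m y : \sum_x mu x * kpow K m x y = mu y.
Proof.
case: hmu => [[mu0 mu1] st].
elim: m y => [|m IH] y /=.
  rewrite (bigD1 y) //= eqxx mulr1 big1 ?addr0 // => z /negbTE ->.
  by rewrite mulr0.
under eq_bigr do rewrite mulr_sumr.
rewrite exchange_big /= -[RHS]st; apply: eq_bigr => z _.
by rewrite -IH mulr_suml; apply: eq_bigr => x _; rewrite mulrA.
Qed.

Variable w : T.
Let v m x := kpow K m x w.

Definition Dosc m : R :=
  let p := Order.arg_max (w, w) xpredT (fun p : T * T => v m p.1 - v m p.2) in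
  v m p.1 - v m p.2.

Lemma Dosc_ge m x x' : v m x - v m x' <= Dosc m.
Proof.
rewrite /Dosc; case: (@arg_maxP _ _ _ (w, w) xpredT (fun p : T * T => v m p.1 - v m p.2) isT).
move=> p _ H; exact: (H (x, x')).
Qed.

Lemma Dosc_ge0 m : 0 <= Dosc m.
Proof. by have := Dosc_ge m w w; rewrite subrr. Qed.

Lemma Dosc_attained m : exists x x', Dosc m = v m x - v m x'.
Proof. by rewrite /Dosc; eexists; eexists. Qed.

Lemma Dosc_mono a m : Dosc (a + m) <= Dosc m.
Proof.
have [zM hM] := argmax_ex (v m) w.
have [zm hm] := argmin_ex (v m) w.
have hb x : v m zm <= v (a + m) x <= v m zM.
  rewrite /v kpowD; apply: convex_bounds => //.
  - by move=> z; apply: kpow_ge0.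
  - exact: kpow_sum1.
  - by move=> z; rewrite hM hm.
have [x [x' ->]] := Dosc_attained (a + m).
apply: le_trans (Dosc_ge m zM zm).
case/andP: (hb x) => _ h1; case/andP: (hb x') => h2 _.
by apply: lerB.
Qed.

Lemma Dosc_mu m x : `|v m x - mu w| <= Dosc m.
Proof.
case: hmu => [[mu0 mu1] st].
rewrite -(stat_pow m w).
have -> : v m x - \sum_x0 mu x0 * kpow K m x0 w = \sum_z mu z * (v m x - v m z).
  rewrite /v -{1}[kpow K m x w]mul1r -mu1 mulr_suml -sumrB; apply: eq_bigr => z _.
  by rewrite mulrBr.
rewrite ler_norml; apply/andP; split.
  rewrite -[Dosc m]mul1r -mu1 mulr_suml -sumrN; apply: ler_sum => z _.
  rewrite -mulrN; apply: ler_wpM2l => //; rewrite lerNl opprB.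
  exact: Dosc_ge.
rewrite -[Dosc m]mul1r -mu1 mulr_suml; apply: ler_sum => z _.
by apply: ler_wpM2l => //; apply: Dosc_ge.
Qed.


Lemma sum_ge_term (p g : T -> R) z0 : (forall z, 0 <= p z * g z) ->
  p z0 * g z0 <= \sum_z p z * g z.
Proof.
move=> h; rewrite (bigD1 z0) //= lerDl; by apply: sumr_ge0 => z _.
Qed.

Hypothesis prim : exists M, forall x y, 0 < kpow K M x y.

Lemma Dosc_contr : exists M d, 0 < d <= 1 /\
  forall m, Dosc (M + m) <= (1 - d) * Dosc m.
Proof.
case: prim => M hpos.
have [p hp] := argmin_ex (fun p : T * T => kpow K M p.1 p.2) (w, w).
exists M, (kpow K M p.1 p.2); split.
  by rewrite hpos kpow_le1.
move=> m.
have [zM hM] := argmax_ex (v m) w.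
have [zm hm] := argmin_ex (v m) w.
set d := kpow K M p.1 p.2.
have d0 : 0 <= d by apply: kpow_ge0.
have D0 : 0 <= v m zM - v m zm by rewrite subr_ge0.
have h1 x : d * (v m zM - v m zm) <= v m zM - v (M + m) x.
  have -> : v m zM - v (M + m) x = \sum_z kpow K M x z * (v m zM - v m z).
    rewrite /v kpowD -{1}[kpow K m zM w]mul1r -(kpow_sum1 M x) mulr_suml -sumrB.
    by apply: eq_bigr => z _; rewrite mulrBr.
  have hs := sum_ge_term (fun z => kpow K M x z) (fun z => v m zM - v m z) zm.
  apply: le_trans (hs _).
    by apply: ler_wpM2r => //; apply: (hp (x, zm)).
  by move=> z; apply: mulr_ge0; [apply: kpow_ge0 | rewrite subr_ge0].
have h2 x : d * (v m zM - v m zm) <= v (M + m) x - v m zm.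
  have -> : v (M + m) x - v m zm = \sum_z kpow K M x z * (v m z - v m zm).
    rewrite /v kpowD -{1}[kpow K m zm w]mul1r -(kpow_sum1 M x) mulr_suml -sumrB.
    by apply: eq_bigr => z _; rewrite mulrBr.
  have hs := sum_ge_term (fun z => kpow K M x z) (fun z => v m z - v m zm) zM.
  apply: le_trans (hs _).
    by apply: ler_wpM2r => //; apply: (hp (x, zM)).
  by move=> z; apply: mulr_ge0; [apply: kpow_ge0 | rewrite subr_ge0].
have [x [x' ->]] := Dosc_attained (M + m).
have hD := Dosc_ge m zM zm.
have := h1 x; have := h2 x'.
have d1 : d <= 1 by apply: kpow_le1.
move=> a b.
apply: le_trans (_ : (1 - d) * (v m zM - v m zm) <= _); last first.
  by apply: ler_wpM2l => //; rewrite subr_ge0.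
have : 0 <= d * (v m zM - v m zm) by apply: mulr_ge0.
lra.
Qed.

Lemma Dosc0_le1 : Dosc 0 <= 1.
Proof.
have [x [x' ->]] := Dosc_attained 0.
have := kpow_le1 0 x w; have := kpow_ge0 0 x' w; rewrite /v; lra.
Qed.

Lemma kpow_cvg x : (fun m => kpow K m x w) @ \oo --> mu w.
Proof.
have [M [d [/andP[d0 d1] hc]]] := Dosc_contr.
have hq q : Dosc (q * M) <= (1 - d) ^+ q.
  elim: q => [|q IH]; first by rewrite mul0n expr0 Dosc0_le1.
  rewrite mulSn -[(M + q * M)%N]addn0 -addnA addn0 exprS.
  apply: le_trans (hc _) _; apply: ler_wpM2l; first by rewrite subr_ge0.
  exact: IH.
have : (GRing.exp (1 - d) : R ^nat) @ \oo --> 0.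
  apply: cvg_expr; rewrite ger0_norm ?subr_ge0 //; lra.
move=> hexp.
apply/(@cvgrPdist_lt _ R^o) => e e0.
move/cvgrPdist_lt: hexp => /(_ e e0) [N _ HN].
exists (N * M)%N => // m /= hm.
rewrite distrC; apply: le_lt_trans (Dosc_mu m x) _.
rewrite -(subnK hm); apply: le_lt_trans (Dosc_mono _ _) _.
apply: le_lt_trans (hq N) _.
have := HN N (leqnn N); rewrite /= sub0r normrN ger0_norm //.
by apply: exprn_ge0; rewrite subr_ge0.
Qed.

End Markov.
Section Main.
Variables (R : realType) (S A O : finType) (n : nat).
Variables (P : S -> A -> S -> R) (d0 : S -> R)
  (pi : O -> S -> A -> R) (beta : O -> S -> 'rV[R]_n -> R) (piO : S -> O -> R)
  (theta : 'rV[R]_n).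
Hypothesis hP : forall s a, is_distr (P s a).
Hypothesis hd0 : is_distr d0.
Hypothesis hpi : forall o s, is_distr (pi o s).
Hypothesis hpiO : forall s, is_distr (piO s).
Hypothesis hbeta : forall o s th, 0 <= beta o s th <= 1.
Hypothesis dbeta : forall o s th, differentiable (beta o s) th.
Hypothesis ddbeta : forall o s v th, differentiable ('D_v (beta o s)) th.

Local Notation X := (O * S)%type.
Local Notation K := (pair_kernel pi P beta piO theta).

Definition optf (y z : X) : 'rV[R]_n -> R :=
  fun th => option_step beta piO th y.1 y.2 z.1.
Definition ssv (y z : X) : R := state_step pi P y.2 z.1 z.2.

Fixpoint pairs (y : X) (l : seq X) : seq (X * X) :=
  match l with [::] => [::] | z :: l' => (y, z) :: pairs z l' end.

Lemma tail_eq th y l : path_tail_prob pi P beta piO th y l =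
  (\prod_(p <- pairs y l) ssv p.1 p.2) * \prod_(p <- pairs y l) optf p.1 p.2 th.
Proof.
elim: l y => [|z l IH] y /=; first by rewrite !big_nil mulr1.
rewrite IH !big_cons /pair_kernel /optf /ssv /=; ring.
Qed.

Lemma ss_ge0 s o s' : 0 <= state_step pi P s o s'.
Proof.
apply: sumr_ge0 => a _; apply: mulr_ge0; [case: (hpi o s) => h _ | case: (hP s a) => h _]; exact: h.
Qed.

Lemma ss_sum1 s o : \sum_s' state_step pi P s o s' = 1.
Proof.
rewrite /state_step exchange_big /=.
case: (hpi o s) => _ <-; apply: eq_bigr => a _.
by rewrite -mulr_sumr; case: (hP s a) => _ ->; rewrite mulr1.
Qed.

Lemma opt_ge0 th o s o' : 0 <= option_step beta piO th o s o'.
Proof.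
rewrite /option_step; have /andP[b0 b1] := hbeta o s th.
apply: addr_ge0; apply: mulr_ge0 => //; first by rewrite subr_ge0.
by case: (hpiO s) => h _; exact: h.
Qed.

Lemma opt_sum1 th o s : \sum_o' option_step beta piO th o s o' = 1.
Proof.
rewrite /option_step big_split /= -!mulr_sumr.
case: (hpiO s) => _ ->.
rewrite (bigD1 o) //= eqxx big1 ?addr0 ?mulr1; first by ring.
by move=> o' /negbTE ->.
Qed.

Lemma K_ge0 y z : 0 <= K y z.
Proof. by apply: mulr_ge0; [apply: opt_ge0 | apply: ss_ge0]. Qed.

Lemma K_sum1 y : \sum_z K y z = 1.
Proof.
rewrite -(pair_big xpredT xpredT (fun o' s' => K y (o', s'))) /=.
rewrite -(opt_sum1 theta y.1 y.2); apply: eq_bigr => o' _.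
by rewrite /pair_kernel /= -mulr_sumr ss_sum1 mulr1.
Qed.

Lemma init_ge0 y : 0 <= pair_init pi P piO d0 y.
Proof.
apply: sumr_ge0 => s0 _; apply: mulr_ge0; last exact: ss_ge0.
apply: mulr_ge0; [case: hd0 => h _ | case: (hpiO s0) => h _]; exact: h.
Qed.

Lemma init_sum1 : \sum_y pair_init pi P piO d0 y = 1.
Proof.
rewrite -(pair_big xpredT xpredT (fun o s => pair_init pi P piO d0 (o, s))) /=.
rewrite /pair_init.
under eq_bigr do (under eq_bigr do rewrite /=; rewrite exchange_big /=).
rewrite exchange_big /=; case: hd0 => _ <-; apply: eq_bigr => s0 _.
under eq_bigr do rewrite -mulr_sumr ss_sum1 mulr1.
by rewrite -mulr_sumr; case: (hpiO s0) => _ ->; rewrite mulr1.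
Qed.


Variables (i j : 'I_n).
Local Notation u := (evec R i).
Local Notation v := (evec R j).

Lemma optf_eq y z : optf y z =
  (fun th => (y.1 == z.1 :> O)%:R + (piO y.2 z.1 - (z.1 == y.1)%:R) * beta y.1 y.2 th).
Proof.
apply: funext => th; rewrite /optf /option_step eq_sym.
move: (_ == _)%:R (beta _ _ th) (piO _ _) => c b p; ring.
Qed.

Lemma aff_diff (f : 'rV[R]_n -> R) (a b : R) th : differentiable f th ->
  differentiable (fun t => a + b * f t) th /\
  forall w, 'D_w (fun t => a + b * f t) th = b * 'D_w f th.
Proof.
move=> df.
have -> : (fun t => a + b * f t) = cst a + (b \*: f) by apply: funext.
split; first by apply: differentiableD; [apply: differentiable_cst | apply: differentiableZ].
move=> w.
have df' : derivable f th w by apply: diff_derivable.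
have d1 : derivable (cst a) th w by apply: derivable_cst.
have d2 : derivable (b \*: f) th w by apply: derivableZ.
have e3 : 'D_w (b \*: f) th = b *: 'D_w f th by apply: deriveZ.
by rewrite (deriveD d1 d2) derive_cst add0r e3.
Qed.

Lemma optf_diff y z th : differentiable (optf y z) th.
Proof. by rewrite optf_eq; exact: (aff_diff _ _ _ _ (dbeta _ _ th)).1. Qed.

Lemma Doptf y z w : 'D_w (optf y z) =
  (piO y.2 z.1 - (z.1 == y.1)%:R) \*: 'D_w (beta y.1 y.2).
Proof.
apply: funext => th; rewrite optf_eq (aff_diff _ _ _ _ (dbeta _ _ th)).2 //.
Qed.

Lemma DDoptf y z th w1 w2 :
  derivable ('D_w2 (optf y z)) th w1 /\
  'D_w1 ('D_w2 (optf y z)) th =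
    (piO y.2 z.1 - (z.1 == y.1)%:R) * 'D_w1 ('D_w2 (beta y.1 y.2)) th.
Proof.
rewrite Doptf.
have d : derivable ('D_w2 (beta y.1 y.2)) th w1 by apply: diff_derivable.
split; first by apply: derivableZ.
have e : 'D_w1 ((piO y.2 z.1 - (z.1 == y.1)%:R) \*: 'D_w2 (beta y.1 y.2)) th =
  (piO y.2 z.1 - (z.1 == y.1)%:R) *: 'D_w1 ('D_w2 (beta y.1 y.2)) th by apply: deriveZ.
by rewrite e.
Qed.

Lemma prod_pos_Forall (I : Type) (r : seq I) (F : I -> R) :
  (forall k, 0 <= F k) -> 0 < \prod_(k <- r) F k -> List.Forall (fun k => 0 < F k) r.
Proof.
move=> F0; elim: r => [|k r IH]; first by constructor.
rewrite big_cons => hp.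
have hk : F k != 0 by apply: contraTneq hp => ->; rewrite mul0r ltxx.
have hr : \prod_(j <- r) F j != 0 by apply: contraTneq hp => ->; rewrite mulr0 ltxx.
constructor; first by rewrite lt0r hk F0.
apply: IH; rewrite lt0r hr /=; apply: prodr_ge0 => *; exact: F0.
Qed.

Definition Lf (p : X * X) : R :=
  'D_u ('D_v (fun th => ln (optf p.1 p.2 th))) theta.

Definition LS (x : seq X) : R :=
  match x with [::] => 0 | y :: l => \sum_(p <- pairs y l) Lf p end.

Lemma pp_DD (x : seq X) :
  path_prob pi P beta piO d0 theta x *
  'D_u ('D_v (fun th => ln (path_prob pi P beta piO d0 th x))) theta =
  path_prob pi P beta piO d0 theta x * LS x.
Proof.
case: x => [|y l].
  rewrite /=.
  have -> : 'D_v (fun _ : 'rV[R]_n => ln (1 : R)) = cst 0.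
    by apply: funext => th; rewrite derive_cst.
  by rewrite derive_cst.
have [->|hp] := eqVneq (path_prob pi P beta piO d0 theta (y :: l)) 0.
  by rewrite !mul0r.
have pp0 : 0 < path_prob pi P beta piO d0 theta (y :: l).
  rewrite lt0r hp /= tail_eq; apply: mulr_ge0; first exact: init_ge0.
  apply: mulr_ge0; apply: prodr_ge0 => p _; [exact: ss_ge0 | exact: opt_ge0].
congr (_ * _).
have -> : (fun th => ln (path_prob pi P beta piO d0 th (y :: l))) =
   (fun th => ln ((pair_init pi P piO d0 y * \prod_(p <- pairs y l) ssv p.1 p.2) *
      \prod_(p <- pairs y l) (fun q : X * X => optf q.1 q.2) p th)).
  by apply: funext => th; rewrite /= tail_eq mulrA.
move: pp0; rewrite /= tail_eq mulrA => pp0.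
have c0 : 0 <= pair_init pi P piO d0 y * \prod_(p <- pairs y l) ssv p.1 p.2.
  apply: mulr_ge0; first exact: init_ge0.
  apply: prodr_ge0 => p _; exact: ss_ge0.
have o0 : 0 <= \prod_(p <- pairs y l) optf p.1 p.2 theta.
  apply: prodr_ge0 => p _; exact: opt_ge0.
have cpos : 0 < pair_init pi P piO d0 y * \prod_(p <- pairs y l) ssv p.1 p.2.
  rewrite lt0r c0 andbT; apply: contraTneq pp0 => ->; by rewrite mul0r ltxx.
have opos : 0 < \prod_(p <- pairs y l) optf p.1 p.2 theta.
  rewrite lt0r o0 andbT; apply: contraTneq pp0 => ->; by rewrite mulr0 ltxx.
rewrite (@DDln_prod R _ (X * X)%type (pairs y l) (fun q => optf q.1 q.2) _ theta u v cpos).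
- by [].
- by move=> q th; apply: optf_diff.
- by move=> q; exact: (DDoptf q.1 q.2 theta u v).1.
- apply: prod_pos_Forall => // q; exact: opt_ge0.
Qed.


Local Notation tl := (path_tail_prob pi P beta piO theta).
Definition LSp (y : X) (l : seq X) : R := \sum_(p <- pairs y l) Lf p.
Definition J (w : X) : R := \sum_z K w z * Lf (w, z).

Lemma W1 k y : \sum_(t : k.-tuple X) tl y t = 1.
Proof.
elim: k y => [|k IH] y; first by rewrite (sum_tuple0 (fun s => tl y s)).
rewrite (sum_tupleS (fun s => tl y s)) -[RHS](K_sum1 y); apply: eq_bigr => z _ /=.
by rewrite -mulr_sumr IH mulr1.
Qed.

Lemma E_eq k y : \sum_(t : k.-tuple X) tl y t * LSp y t =
  \sum_(m < k) \sum_w kpow K m y w * J w.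
Proof.
elim: k y => [|k IH] y.
  by rewrite (sum_tuple0 (fun s => tl y s * LSp y s)) big_ord0 /LSp big_nil mulr0.
rewrite (sum_tupleS (fun s => tl y s * LSp y s)) big_ord_recl.
have -> : \sum_w kpow K 0 y w * J w = J y.
  rewrite (bigD1 y) //= eqxx mul1r big1 ?addr0 // => w.
  by rewrite eq_sym => /negbTE ->; rewrite mul0r.
have hk m w : kpow K (bump 0 m) y w * J w = \sum_z K y z * (kpow K m z w * J w).
  rewrite (_ : bump 0 m = 1 + m)%N // kpowD mulr_suml; apply: eq_bigr => z _.
  by rewrite kpow1 mulrA.
have -> : \sum_(m < k) \sum_w kpow K (bump 0 m) y w * J w =
    \sum_z K y z * \sum_(m < k) \sum_w kpow K m z w * J w.
  under eq_bigr do under eq_bigr do rewrite hk.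
  under [RHS]eq_bigr do (rewrite mulr_sumr; under eq_bigr do rewrite mulr_sumr).
  rewrite [RHS]exchange_big; apply: eq_bigr => m _.
  by rewrite [RHS]exchange_big.
rewrite /J -big_split /=; apply: eq_bigr => z _.
rewrite -IH mulr_sumr -[K y z * Lf (y, z)]mulr1 -(W1 k z) mulr_sumr -big_split /=.
apply: eq_bigr => t _; rewrite /LSp big_cons; ring.
Qed.

Definition nu m w := \sum_y pair_init pi P piO d0 y * kpow K m y w.

Lemma fisher_eq k : fisherT pi P beta piO d0 k.+1 theta i j =
  \sum_(m < k) - \sum_w nu m w * J w.
Proof.
rewrite /fisherT.
under eq_bigr do rewrite pp_DD.
rewrite (sum_tupleS (fun x => path_prob pi P beta piO d0 theta x * LS x)) /=.
rewrite sumrN; congr (- _).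
have -> : \sum_x \sum_(t : k.-tuple X) pair_init pi P piO d0 x * tl x t * LS (x :: t) =
  \sum_x pair_init pi P piO d0 x * \sum_(m < k) \sum_w kpow K m x w * J w.
  apply: eq_bigr => x _; rewrite -E_eq mulr_sumr; apply: eq_bigr => t _.
  by rewrite /= mulrA.
under eq_bigr do rewrite mulr_sumr.
rewrite exchange_big /=; apply: eq_bigr => m _.
under eq_bigr do rewrite mulr_sumr.
rewrite exchange_big /=; apply: eq_bigr => w _.
by rewrite /nu mulr_suml; apply: eq_bigr => y _; rewrite mulrA.
Qed.

Lemma fisher0 : fisherT pi P beta piO d0 0 theta i j = 0.
Proof.
rewrite /fisherT.
under eq_bigr do rewrite pp_DD.
by rewrite (sum_tuple0 (fun x => path_prob pi P beta piO d0 theta x * LS x)) /= mulr0 oppr0.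
Qed.


Hypothesis bpos : forall o s, 0 < beta o s theta.
Hypothesis fpos : forall o s, 0 < 1 - beta o s theta + beta o s theta * piO s o.

Lemma Doptf_pt y z w th :
  'D_w (optf y z) th = (piO y.2 z.1 - (z.1 == y.1)%:R) * 'D_w (beta y.1 y.2) th.
Proof. exact: (congr1 (fun F => F th) (Doptf y z w)). Qed.

Lemma optL o s o' :
  option_step beta piO theta o s o' * Lf ((o, s), (o', s)) =
  (piO s o' - (o' == o)%:R) * 'D_u ('D_v (beta o s)) theta -
  (piO s o' - (o' == o)%:R) ^+ 2 * 'D_v (beta o s) theta * 'D_u (beta o s) theta /
     option_step beta piO theta o s o'.
Proof.
set y : X := (o, s); set z : X := (o', s).
have hopt : option_step beta piO theta o s o' = optf y z theta by [].
have [h0|hpos] := eqVneq (optf y z theta) 0.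
  have ho : o' != o.
    apply/negP => /eqP eo; move: h0; rewrite /optf /option_step /= eo eqxx mulr1.
    by move/eqP; rewrite gt_eqF // -addrA -mulrN1 -mulrDr; move: (fpos o s); rewrite /=; lra.
  have hp : piO s o' = 0.
    move: h0; rewrite /optf /option_step /= (negbTE ho) mulr0 add0r => /eqP.
    by rewrite mulf_eq0 gt_eqF ?bpos //= => /eqP.
  rewrite hopt h0 mul0r hp (negbTE ho) subrr.
  move: ('D_u _ _) ('D_v (beta o s) theta) ('D_u (beta o s) theta) (0 : R)^-1 => a b c d.
  ring.
have op : 0 < optf y z theta.
  by rewrite lt0r hpos; apply: opt_ge0.
rewrite hopt /Lf.
have [_ ->] := @DDln R _ (optf y z) theta u v (optf_diff y z) op (DDoptf y z theta u v).1.
rewrite (DDoptf y z theta u v).2 !Doptf_pt /=.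
move: (optf y z theta) hpos => q hq.
move: ('D_u _ _) ('D_v _ _) ('D_u (beta o s) theta) (piO s o' - _) => a b c d.
by field.
Qed.


Lemma J_sum o s : J (o, s) =
  \sum_o' option_step beta piO theta o s o' * Lf ((o, s), (o', s)).
Proof.
rewrite /J -(pair_big xpredT xpredT (fun o' s' => K (o, s) (o', s') * Lf ((o, s), (o', s')))) /=.
apply: eq_bigr => o' _.
have -> : \sum_s' K (o, s) (o', s') * Lf ((o, s), (o', s')) =
  \sum_s' option_step beta piO theta o s o' * Lf ((o, s), (o', s)) * state_step pi P s o' s'.
  apply: eq_bigr => s' _; rewrite /pair_kernel /=.
  rewrite (_ : Lf ((o, s), (o', s')) = Lf ((o, s), (o', s))) //; ring.
by rewrite -mulr_sumr ss_sum1 mulr1.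
Qed.

Lemma J_eq o s : J (o, s) =
  'D_u (fun th => ln (beta o s th)) theta *
  'D_v (fun th => ln (1 - beta o s th + beta o s th * piO s o)) theta.
Proof.
rewrite J_sum.
under eq_bigr do rewrite optL.
rewrite big_split /= -mulr_suml sumrN.
have hs1 : \sum_o' (piO s o' - (o' == o)%:R) = 0.
  rewrite sumrB; case: (hpiO s) => _ ->.
  rewrite (bigD1 o) //= eqxx big1 ?addr0 ?subrr // => o' /negbTE ->; by [].
rewrite hs1 mul0r add0r.
set b := beta o s theta.
have b0 : 0 < b := bpos o s.
have hsum2 : \sum_o' (piO s o' - (o' == o)%:R) ^+ 2 * 'D_v (beta o s) theta *
    'D_u (beta o s) theta / option_step beta piO theta o s o' =
   'D_v (beta o s) theta * 'D_u (beta o s) theta *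
   ((piO s o - 1) ^+ 2 / (1 - b + b * piO s o) + (1 - piO s o) / b).
  rewrite (bigD1 o) //= eqxx.
  have -> : option_step beta piO theta o s o = 1 - b + b * piO s o.
    by rewrite /option_step eqxx -/b mulr1.
  have -> : \sum_(o' | o' != o) (piO s o' - (o' == o)%:R) ^+ 2 *
      'D_v (beta o s) theta * 'D_u (beta o s) theta / option_step beta piO theta o s o' =
      \sum_(o' | o' != o) 'D_v (beta o s) theta * 'D_u (beta o s) theta * (piO s o' / b).
    apply: eq_bigr => o' /negbTE ho.
    rewrite /option_step ho mulr0 add0r subr0 -/b.
    have [->|hp] := eqVneq (piO s o') 0; first by rewrite expr0n /= !mul0r mulr0.
    move: ('D_v _ _) ('D_u _ _) (piO s o') hp => a c p hp.
    by field; rewrite hp gt_eqF.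
  rewrite -mulr_sumr -mulr_suml.
  have -> : \sum_(o' | o' != o) piO s o' = 1 - piO s o.
    case: (hpiO s) => _; rewrite (bigD1 o) //= => <-; ring.
  rewrite (_ : true%:R = 1 :> R) //.
  move: ('D_v _ _) ('D_u _ _) (piO s o) => a c p; ring.
rewrite hsum2.
have [_ ->] := @Dln R _ (beta o s) theta u (dbeta o s theta) b0.
have geq : (fun th => ln (1 - beta o s th + beta o s th * piO s o)) =
    (fun th => ln (1 + (piO s o - 1) * beta o s th)).
  by apply: funext => th; congr ln; move: (beta o s th) (piO s o) => x p; ring.
have f0 := fpos o s.
rewrite geq.
have [dg hg] := aff_diff (beta o s) 1 (piO s o - 1) theta (dbeta o s theta).
have gpos : 0 < 1 + (piO s o - 1) * beta o s theta.
  by move: f0; rewrite -/b; move: (piO s o) => p; lra.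
have [_ ->] := @Dln R _ (fun th => 1 + (piO s o - 1) * beta o s th) theta v dg gpos.
rewrite hg -/b.
move: gpos f0; rewrite -/b.
move: ('D_v _ _) ('D_u _ _) (piO s o) => a c p g0 f0.
field.
by rewrite !gt_eqF.
Qed.


Lemma seqsum_cvg (I : Type) (r : seq I) (f : I -> nat -> R) (l : I -> R) :
  (forall k, f k @ \oo --> l k) ->
  (fun m => \sum_(k <- r) f k m) @ \oo --> \sum_(k <- r) l k.
Proof.
move=> h; elim: r => [|k r IH].
  under eq_cvg do rewrite big_nil.
  rewrite big_nil; exact: cvg_cst.
under eq_cvg do rewrite big_cons.
rewrite big_cons; exact: cvgD (h k) IH.
Qed.

Lemma final_cvg (mu : S -> O -> R) :
  ergodic_chain K -> stationary K (fun x : X => mu x.2 x.1) ->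
  (fun T : nat => fisherT pi P beta piO d0 T theta i j / T%:R) @ \oo -->
    - \sum_(s : S) \sum_(o : O)
        mu s o * 'D_u (fun th => ln (beta o s th)) theta
               * 'D_v (fun th => ln (1 - beta o s th + beta o s th * piO s o)) theta.
Proof.
move=> herg hst.
set M := fun x : X => mu x.2 x.1.
have hk x w : (fun m => kpow K m x w) @ \oo --> M w.
  exact: (@kpow_cvg R X K K_ge0 K_sum1 M hst w herg x).
have hnu w : (fun m => nu m w) @ \oo --> M w.
  have h := @seqsum_cvg X (index_enum X) _ _ (fun y => @cvgMl_tmp _ _ _ _ _ (pair_init pi P piO d0 y) _ (hk y w)).
  move: h; rewrite -big_distrl /= init_sum1 mul1r; exact.
set cstar := - \sum_w M w * J w.
have hc : (fun m => - \sum_w nu m w * J w) @ \oo --> cstar.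
  apply: cvgN; exact: (@seqsum_cvg X (index_enum X) _ _ (fun w => @cvgMr_tmp _ _ _ _ _ _ (J w) (hnu w))).
set uu := fun m => if m is m'.+1 then - \sum_w nu m' w * J w else 0.
have hu : uu @ \oo --> cstar by rewrite -cvg_shiftS.
have ha := cesaro hu.
have -> : - \sum_(s : S) \sum_(o : O)
        mu s o * 'D_u (fun th => ln (beta o s th)) theta
               * 'D_v (fun th => ln (1 - beta o s th + beta o s th * piO s o)) theta = cstar.
  rewrite /cstar -(pair_big xpredT xpredT (fun o s => M (o, s) * J (o, s))) /=.
  rewrite exchange_big /=; congr (- _); apply: eq_bigr => s _; apply: eq_bigr => o _.
  by rewrite J_eq mulrA.
rewrite -cvg_shiftS.
suff -> : [sequence fisherT pi P beta piO d0 n.+1 theta i j / n.+1%:R]_n = arithmetic_mean uu.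
  exact: ha.
apply: funext => m; rewrite /arithmetic_mean /series /= big_nat_recl //= add0r.
rewrite fisher_eq big_mkord mulrC; congr (_ * _).
Qed.

End Main.

Theorem theorem2 (R : realType) (S A O : finType) (n : nat)
  (P : S -> A -> S -> R) (Rew : S -> A -> R) (d0 : S -> R) (gamma : R)
  (pi : O -> S -> A -> R) (beta : O -> S -> 'rV[R]_n -> R) (piO : S -> O -> R)
  (mu : S -> O -> R) (theta : 'rV[R]_n) (i j : 'I_n) :
  (forall s a, is_distr (P s a)) ->
  is_distr d0 ->
  0 <= gamma < 1 ->
  (forall o s, is_distr (pi o s)) ->
  (forall s, is_distr (piO s)) ->
  (forall o s th, 0 <= beta o s th <= 1) ->
  (forall o s th, differentiable (beta o s) th) ->
  (forall o s v th, differentiable ('D_v (beta o s)) th) ->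
  (forall o s, 0 < beta o s theta) ->
  (forall o s, 0 < 1 - beta o s theta + beta o s theta * piO s o) ->
  irreducible_chain (pair_kernel pi P beta piO theta) ->
  ergodic_chain (pair_kernel pi P beta piO theta) ->
  stationary (pair_kernel pi P beta piO theta) (fun x : O * S => mu x.2 x.1) ->
  (fun T : nat => fisherT pi P beta piO d0 T theta i j / T%:R) @ \oo -->
    - \sum_(s : S) \sum_(o : O)
        mu s o * 'D_(evec R i) (fun th => ln (beta o s th)) theta
               * 'D_(evec R j) (fun th => ln (1 - beta o s th + beta o s th * piO s o)) theta.
Proof.
move=> hP hd0 _ hpi hpiO hbeta dbeta ddbeta bpos fpos _ herg hst.
exact: (@final_cvg R S A O n P d0 pi beta piO theta hP hd0 hpi hpiO hbeta dbeta ddbeta i j bpos fpos mu herg hst).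
Qed.
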